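(* Let $H$ and $H'$ be Hessenberg spaces of $n\times n$ matrices, each minimal in its $E_{1n}$-equivalence class. Then $X_H\subseteq X_{H'}$ if and only if $H\subseteq H'$.
   Context: $B$ is the group of invertible upper-triangular $n\times n$ complex matrices; $[g]$ denotes the flag whose $k$-dimensional subspace is spanned by the first $k$ columns of $g$. $E_{kl}$ is the matrix unit with $1$ in entry $(k,l)$. A Hessenberg space is a subspace of the form $H_h=\operatorname{span}\{E_{kl}: k\le h(l)\}$ for a nondecreasing function $h:\{1,\dots,n\}\to\{0,1,\dots,n\}$. For a Hessenberg space $K$, $X_K=\{[g]\in GL_n(\mathbb{C})/B: g^{-1}E_{1n}g\in K\}$. Two Hessenberg spaces $K,K'$ are $E_{1n}$-equivalent if $X_K=X_{K'}$; $K$ is minimal in its $E_{1n}$-equivalence class if no Hessenberg space properly contained in $K$ is $E_{1n}$-equivalent to $K$. *)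

(* Defs.v *)
From HB Require Import structures.
From mathcomp Require Import all_boot all_order all_algebra.
From mathcomp Require Import complex Rstruct.
Set Implicit Arguments. Unset Strict Implicit. Unset Printing Implicit Defensive.
Import GRing.Theory.
Local Open Scope ring_scope.

Definition C : fieldType := complex Rdefinitions.R.

(* Indices are 0-based: row/column k (1-based) is the ordinal k-1 in 'I_n. *)

Definition Eunit (n : nat) (k l : 'I_n) : 'M[C]_n := delta_mx k l.

Definition E1n (n : nat) : 'M[C]_n :=
  \matrix_(i, j) (((i : nat) == 0%N) && ((j : nat) == n.-1))%:R.

(* A Hessenberg function h : {1..n} -> {0..n}, nondecreasing.
   Represented as h : 'I_n -> nat (h l = value at column l+1). *)
Definition hess_fun (n : nat) (h : 'I_n -> nat) : Prop :=
  (forall l, (h l <= n)%N) /\ (forall l l' : 'I_n, (l <= l')%N -> (h l <= h l')%N).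

(* H_h = span{E_{kl} : k <= h(l)}  (1-based), i.e. 0-based row i with i < h j. *)
Definition hess_space (n : nat) (h : 'I_n -> nat) : {vspace 'M[C]_n} :=
  <<[seq Eunit i j | i <- enum 'I_n, j <- [seq j <- enum 'I_n | (i < h j)%N]]>>%VS.

Definition is_hess_space (n : nat) (K : {vspace 'M[C]_n}) : Prop :=
  exists h, hess_fun h /\ K = hess_space h.

(* Flags in C^n: a flag is given by its k-dimensional subspaces, k = 0..n. *)
Definition flag (n : nat) := 'I_n.+1 -> {vspace 'cV[C]_n}.

Definition flag_of (n : nat) (g : 'M[C]_n) : flag n :=
  fun k => <<[seq col j g | j : 'I_n <- enum 'I_n & (nat_of_ord j < nat_of_ord k)%N]>>%VS.

(* X_K = { [g] in GL_n(C)/B : g^{-1} E_{1n} g \in K }, as a set of flags. *)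
Definition X (n : nat) (K : {vspace 'M[C]_n}) (F : flag n) : Prop :=
  exists g : 'M[C]_n, g \in unitmx /\ (forall k, F k = flag_of g k) /\
    (invmx g *m E1n n *m g) \in K.

Definition X_subset (n : nat) (K K' : {vspace 'M[C]_n}) : Prop :=
  forall F : flag n, X K F -> X K' F.

Definition E1n_equiv (n : nat) (K K' : {vspace 'M[C]_n}) : Prop :=
  forall F : flag n, X K F <-> X K' F.

Definition minimal_hess (n : nat) (K : {vspace 'M[C]_n}) : Prop :=
  is_hess_space K /\
  forall K' : {vspace 'M[C]_n}, is_hess_space K' -> (K' <= K)%VS -> K' != K ->
    ~ E1n_equiv K' K.

(* Main.v *)
Require Import Defs.
From HB Require Import structures.
From mathcomp Require Import all_boot all_order all_algebra all_fingroup.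
From mathcomp Require Import complex Rstruct.
From mathcomp Require Import zify.
Set Implicit Arguments. Unset Strict Implicit. Unset Printing Implicit Defensive.
Import GRing.Theory.
Local Open Scope ring_scope.

Lemma hess_memP n (h : 'I_n -> nat) (M : 'M[C]_n) :
  M \in hess_space h <-> (forall i j : 'I_n, (h j <= i)%N -> M i j = 0).
Proof.
split.
- move=> HM i j hij.
  rewrite (coord_span (X := in_tuple _) HM) summxE big1 // => k _.
  rewrite mxE.
  have : (in_tuple [seq Eunit i0 j0 | i0 <- enum 'I_n,
            j0 <- [seq j1 <- enum 'I_n | (i0 < h j1)%N]])`_k \in
         [seq Eunit i0 j0 | i0 <- enum 'I_n,
            j0 <- [seq j1 <- enum 'I_n | (i0 < h j1)%N]] by apply: mem_nth.
  case/allpairsPdep => i' [j' [_ Hj' ->]].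
  rewrite mem_filter in Hj'; case/andP: Hj' => Hj' _.
  rewrite /Eunit mxE.
  case: eqP => [ei|_]; last by rewrite mulr0.
  case: eqP => [ej|_]; last by rewrite mulr0.
  by exfalso; move: Hj'; rewrite -ei -ej ltnNge hij.
- move=> HM; rewrite (matrix_sum_delta M).
  apply: memv_suml => i _; apply: memv_suml => j _.
  case: (ltnP i (h j)) => hij; last by rewrite HM // scale0r mem0v.
  apply: memvZ; apply: memv_span; apply/allpairsPdep.
  by exists i, j; rewrite mem_enum mem_filter hij mem_enum.
Qed.
Definition upper n (b : 'M[C]_n) := forall r s : 'I_n, (s < r)%N -> b r s = 0.

Lemma col_mul n m p (j : 'I_p) (A : 'M[C]_(n, m)) (B : 'M[C]_(m, p)) :
  col j (A *m B) = A *m col j B.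
Proof. by rewrite !colE mulmxA. Qed.

Lemma mem_flag_col n (g : 'M[C]_n) (k : 'I_n.+1) (l : 'I_n) :
  (l < k)%N -> col l g \in flag_of g k.
Proof.
move=> lk; apply: memv_span; apply: map_f; by rewrite mem_filter lk mem_enum.
Qed.

Lemma flagL n (g : 'M[C]_n) (k : 'I_n.+1) x : g \in unitmx ->
  x \in flag_of g k -> forall r : 'I_n, (k <= r)%N -> (invmx g *m x) r 0 = 0.
Proof.
move=> gu Hx r kr.
rewrite (coord_span (X := in_tuple _) Hx) mulmx_sumr summxE big1 // => m _.
rewrite -scalemxAr mxE.
set X := [seq _ | _ <- _ & _].
have : (in_tuple X)`_m \in X by apply: mem_nth.
case/mapP => l; rewrite mem_filter => /andP [lk _] ->.
rewrite -col_mul mulVmx // !mxE.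
case: eqP => [e|_]; last by rewrite mulr0.
by exfalso; move: lk; rewrite -e ltnNge kr.
Qed.

Lemma flagA n (g g' : 'M[C]_n) : g \in unitmx ->
  (forall k, flag_of g k = flag_of g' k) -> upper (invmx g *m g').
Proof.
move=> gu E r s sr.
have -> : (invmx g *m g') r s = (invmx g *m col s g') r 0 by rewrite -col_mul [RHS]mxE.
have ks : (s.+1 < n.+1)%N by rewrite ltnS.
apply: (@flagL n g (Ordinal ks)) => //.
by rewrite E; apply: mem_flag_col => /=.
Qed.

Lemma col_mulE n (g b : 'M[C]_n) l :
  col l (g *m b) = \sum_m b m l *: col m g.
Proof.
apply/matrixP => p q; rewrite !mxE summxE; apply: eq_bigr => m _.
by rewrite !mxE mulrC.
Qed.

Lemma flagBsub n (g b : 'M[C]_n) k : upper b -> (flag_of (g *m b) k <= flag_of g k)%VS.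
Proof.
move=> ub; apply/span_subvP => x /mapP [l]; rewrite mem_filter => /andP [lk _] ->.
rewrite col_mulE; apply: memv_suml => m _.
case: (ltnP m k) => mk; first by apply: memvZ; apply: mem_flag_col.
by rewrite ub ?scale0r ?mem0v //; apply: leq_trans mk.
Qed.

Lemma upper_det n (b : 'M[C]_n) : upper b -> \det b = \prod_i b i i.
Proof.
move=> ub; rewrite -det_tr det_trig; last first.
  by apply/is_trig_mxP => i j ij; rewrite mxE ub.
by apply: eq_bigr => i _; rewrite mxE.
Qed.

Lemma upper_diag n (b : 'M[C]_n) : upper b -> b \in unitmx -> forall i, b i i != 0.
Proof.
move=> ub; rewrite unitmxE upper_det // unitfE => /prodf_neq0 H i.
exact: H.
Qed.

Lemma upper_inv n (b : 'M[C]_n) : upper b -> b \in unitmx -> upper (invmx b).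
Proof.
move=> ub bu r.
have step : forall s : 'I_n, (s < r)%N ->
    (forall m : 'I_n, (m < s)%N -> invmx b r m = 0) -> invmx b r s = 0.
  move=> s sr IH.
  have rs : (r == s) = false by apply/eqP => e; move: sr; rewrite e ltnn.
  have := congr1 (fun M : 'M[C]_n => M r s) (mulVmx bu).
  rewrite !mxE (bigD1 s) //= big1 => [|m ms].
    by rewrite addr0 rs => /eqP; rewrite mulf_eq0 (negbTE (upper_diag ub bu s)) orbF => /eqP.
  case: (ltnP s m) => sm; first by rewrite ub ?mulr0.
  have ms' : (m < s)%N by rewrite ltn_neqAle sm andbT; apply: contra ms => /eqP e; apply/eqP/val_inj.
  by rewrite IH ?mul0r.
have key : forall s0 : nat, forall s : 'I_n, (s <= s0)%N -> (s < r)%N -> invmx b r s = 0.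
  elim=> [|s0 IH] s ss0 sr; apply: step => // m ms.
    by move: ms; rewrite ltnNge (leq_trans ss0).
  by apply: IH; [rewrite -ltnS; apply: leq_trans ms ss0 | apply: ltn_trans ms sr].
by move=> s sr; apply: (key s).
Qed.

Lemma flagB n (g b : 'M[C]_n) : upper b -> b \in unitmx ->
  forall k, flag_of (g *m b) k = flag_of g k.
Proof.
move=> ub bu k; apply/subv_anti/andP; split; first exact: flagBsub.
have := @flagBsub n (g *m b) (invmx b) k (upper_inv ub bu).
by rewrite mulmxK.
Qed.

Lemma E1nE n (o0 on : 'I_n) : val o0 = 0%N -> val on = n.-1 -> E1n n = delta_mx o0 on.
Proof.
move=> e0 en; apply/matrixP => i j; rewrite !mxE.
by congr (_%:R); congr (_ && _); apply/eqP/eqP => [e|->//]; apply/val_inj => //=; rewrite e ?e0 ?en.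
Qed.

Lemma mul_delta_entry n (A B : 'M[C]_n) i j r s :
  (A *m delta_mx i j *m B) r s = A r i * B j s.
Proof.
have -> : delta_mx i j = delta_mx i 0 *m delta_mx (0 : 'I_1) j :> 'M[C]_n by rewrite mul_delta_mx.
by rewrite mulmxA -colE -mulmxA -rowE mxE big_ord1 !mxE.
Qed.

Lemma diag_prod n (c b : 'M[C]_n) : upper c -> upper b -> c *m b = 1%:M ->
  forall i, c i i * b i i = 1.
Proof.
move=> uc ub cb i.
have := congr1 (fun M : 'M[C]_n => M i i) cb.
rewrite !mxE eqxx (bigD1 i) //= big1 ?addr0 // => m mi.
case: (ltnP i m) => im; first by rewrite ub ?mulr0.
have mi' : (m < i)%N by rewrite ltn_neqAle im andbT; apply: contra mi => /eqP e; apply/eqP/val_inj.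
by rewrite uc ?mul0r.
Qed.

Lemma realize n (i j : 'I_n) : i != j ->
  exists g : 'M[C]_n, g \in unitmx /\ invmx g *m E1n n *m g = delta_mx i j.
Proof.
move=> ij.
have n2 : (1 < n)%N.
  case: n i j ij => [[]//|[|n]] i j ij //.
  by exfalso; move: ij; rewrite (ord1 i) (ord1 j) eqxx.
have n0 : (0 < n)%N by apply: ltn_trans n2.
have nn : (n.-1 < n)%N by rewrite prednK.
pose o0 := Ordinal n0; pose on := Ordinal nn.
have o0on : o0 != on.
  apply/eqP => /(congr1 val) /=; move: n2; case: n {i j ij o0 on n0 nn} => [|[|n]] //.
pose s1 := tperm o0 i; pose s := (s1 * tperm (s1 on) j)%g.
have s1on : s1 on != i.
  apply: contra o0on => /eqP e; apply/eqP; apply: (@perm_inj _ s1).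
  by rewrite e /s1 tpermL.
have so0 : s o0 = i.
  by rewrite /s permM /s1 tpermL tpermD // eq_sym.
have son : s on = j by rewrite /s permM tpermL.
pose g : 'M[C]_n := perm_mx s.
have gu : g \in unitmx by apply: unitmx_perm.
exists g; split => //.
rewrite -mulmxA.
have -> : E1n n *m g = g *m delta_mx i j.
  rewrite (E1nE (o0 := o0) (on := on)) //.
  apply/matrixP => a c.
  rewrite -[delta_mx o0 on]mul1mx mul_delta_entry -[g *m delta_mx i j]mulmx1 mul_delta_entry.
  rewrite /g /perm_mx !mxE.
  have -> : (s a == i) = (a == o0) by rewrite -so0 (inj_eq perm_inj).
  by rewrite son.
by rewrite mulKmx.
Qed.

Lemma key_a n (h h' : 'I_n -> nat) (i j : 'I_n) (g : 'M[C]_n) :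
  g \in unitmx -> invmx g *m E1n n *m g = delta_mx i j ->
  (i < h j)%N -> (h' j <= i)%N -> X_subset (hess_space h) (hess_space h') -> False.
Proof.
move=> gu Eg ihj hi Xs.
have XF : X (hess_space h) (flag_of g).
  exists g; split => //; split => //; rewrite Eg; apply/hess_memP => r s hs.
  rewrite mxE; case: eqP => [ri|_]; case: eqP => [sj|_] //=.
  by exfalso; move: hs; rewrite ri sj leqNgt ihj.
case: (Xs _ XF) => g' [g'u [Ef HM']].
have ub : upper (invmx g *m g') := flagA gu Ef.
have uc : upper (invmx g' *m g) := flagA g'u (fun k => esym (Ef k)).
have cb : (invmx g' *m g) *m (invmx g *m g') = 1%:M by rewrite mulmxA mulmxK // mulVmx.
have bc : (invmx g *m g') *m (invmx g' *m g) = 1%:M by rewrite mulmxA mulmxK // mulVmx.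
have d1 := diag_prod uc ub cb i.
have d2 := diag_prod ub uc bc j.
have E' : invmx g' *m E1n n *m g' = (invmx g' *m g) *m delta_mx i j *m (invmx g *m g').
  by rewrite -Eg !mulmxA !mulmxK.
move/hess_memP: HM' => /(_ i j hi); rewrite E' mul_delta_entry => /eqP.
rewrite mulf_eq0 => /orP [] /eqP e.
  by move: d1; rewrite e mul0r => /eqP; rewrite eq_sym oner_eq0.
by move: d2; rewrite e mul0r => /eqP; rewrite eq_sym oner_eq0.
Qed.

Definition hlow n (h : 'I_n -> nat) (j : 'I_n) : 'I_n -> nat :=
  fun l => if l == j then (j : nat) else h l.

Lemma normalize n (h : 'I_n -> nat) (j : 'I_n) (g : 'M[C]_n) :
  (1 < n)%N -> g \in unitmx -> h j = j.+1 ->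
  invmx g *m E1n n *m g \in hess_space h ->
  exists g', g' \in unitmx /\ (forall k, flag_of g k = flag_of g' k) /\
    invmx g' *m E1n n *m g' \in hess_space (hlow h j).
Proof.
move=> n2 gu hj HM.
have n0 : (0 < n)%N by apply: ltn_trans n2.
have nn : (n.-1 < n)%N by rewrite prednK.
pose o0 := Ordinal n0; pose on := Ordinal nn.
have o0on : o0 != on.
  apply/eqP => /(congr1 val) /=; move: n2; case: n {h j g gu hj HM o0 on n0 nn} => [|[|n]] //.
have EE := E1nE (o0 := o0) (on := on) (erefl _) (erefl _).
rewrite EE in HM *.
pose u r := invmx g r o0.
have [i0 ui0] : exists i0, u i0 != 0.
  case: (pickP (fun m => u m != 0)) => [m um|Hno]; first by exists m.
  exfalso; have := congr1 (fun M : 'M[C]_n => M o0 o0) (mulmxV gu).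
  rewrite !mxE eqxx big1 => [|m _]; first by move/eqP; rewrite eq_sym oner_eq0.
  by have := Hno m; rewrite /= /u => /negbFE/eqP ->; rewrite mulr0.
case: (@arg_maxnP _ i0 (fun m => u m != 0) (fun m : 'I_n => (m : nat)) ui0) => a ua amax.
pose b : 'M[C]_n := \matrix_(r, s) if s == a then u r else (r == s)%:R.
have ub : upper b.
  move=> r s sr; rewrite mxE; case: eqP => [sa|_].
    case: (eqVneq (u r) 0) => // /amax ra; exfalso.
    by have := leq_trans sr ra; rewrite sa ltnn.
  by case: eqP => // e; move: sr; rewrite e ltnn.
have bu : b \in unitmx.
  rewrite unitmxE upper_det // unitfE; apply/prodf_neq0 => i _.
  rewrite mxE; case: (eqVneq i a) => [->|_]; first by [].
  by rewrite eqxx oner_neq0.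
exists (g *m b); split; first by rewrite unitmx_mul gu bu.
split; first by move=> k; rewrite flagB.
have g'u : g *m b \in unitmx by rewrite unitmx_mul gu bu.
have Hib : invmx (g *m b) *m g = invmx b.
  by rewrite -{2}(mulmxK bu g) mulmxA mulVmx // mul1mx.
have E' : invmx (g *m b) *m delta_mx o0 on *m (g *m b) =
          (invmx b *m invmx g) *m delta_mx o0 on *m (g *m b).
  by rewrite -Hib -(mulmxA _ g) mulmxV // mulmx1.
have colab : col a b = col o0 (invmx g) by apply/matrixP => r c; rewrite !mxE eqxx.
have Eu : forall r, (invmx b *m invmx g) r o0 = (r == a)%:R.
  move=> r.
  have -> : (invmx b *m invmx g) r o0 = (invmx b *m col o0 (invmx g)) r 0.
    by rewrite -col_mul [RHS]mxE.
  by rewrite -colab -col_mul mulVmx // !mxE.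
have Ewa : (g *m b) on a = 0.
  have := congr1 (fun M : 'M[C]_n => M on o0) (mulmxV gu).
  have onz : (on == o0) = false by rewrite eq_sym (negbTE o0on).
  rewrite !mxE onz /= => H; apply: etrans H.
  by apply: eq_bigr => m _; rewrite /b mxE eqxx.
have Ews : forall s, s != a -> (g *m b) on s = g on s.
  move=> s sa.
  have cs : col s b = col s 1%:M by apply/matrixP => r c; rewrite !mxE (negbTE sa).
  have -> : (g *m b) on s = (g *m col s b) on 0 by rewrite -col_mul [RHS]mxE.
  by rewrite cs -col_mul mulmx1 mxE.
apply/hess_memP => r s hs.
rewrite E' mul_delta_entry Eu.
case: eqP => [ra|_]; last by rewrite mul0r.
case: (eqVneq s a) => [sa|sa]; first by rewrite sa Ewa mulr0.
rewrite Ews // mul1r.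
case: (eqVneq (g on s) 0) => // gs.
exfalso.
have Mas : (invmx g *m delta_mx o0 on *m g) a s != 0.
  by rewrite mul_delta_entry mulf_neq0.
have ahs : (a < h s)%N.
  rewrite ltnNge; apply/negP => hsa; move/hess_memP: HM => /(_ a s hsa) e.
  by move: Mas; rewrite e eqxx.
move: hs; rewrite /hlow ra; case: eqP => [sj|_]; last by rewrite leqNgt ahs.
move=> ja; move: ahs; rewrite sj hj ltnS => aj.
by move: sa; rewrite sj; case/negP; apply/eqP/val_inj/anti_leq; rewrite ja aj.
Qed.

Lemma key_b n (h : 'I_n -> nat) (j : 'I_n) : (1 < n)%N -> hess_fun h ->
  minimal_hess (hess_space h) -> h j = j.+1 -> exists l : 'I_n, l.+1 = j /\ (j < h l)%N.
Proof.
move=> n2 [hb hm] [_ Hmin] hj.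
have [/existsP [l /andP [/eqP e hl]]|Hno] :=
  boolP [exists l : 'I_n, (l.+1 == j) && (j < h l)%N]; first by exists l.
exfalso; move/existsPn: Hno => Hno.
have Hlow : forall l : 'I_n, (l < j)%N -> (h l <= j)%N.
  move=> l lj.
  have jn : (j.-1 < n)%N := leq_ltn_trans (leq_pred j) (ltn_ord j).
  have j0 : (0 < j)%N by apply: leq_ltn_trans lj.
  have := Hno (Ordinal jn); rewrite /= prednK // eqxx /= -leqNgt => hmj.
  apply: leq_trans hmj; apply: hm => /=; by rewrite -ltnS prednK.
have hf : hess_fun (hlow h j).
  split.
    by move=> l; rewrite /hlow; case: eqP => _; [exact: ltnW (ltn_ord j) | exact: hb].
  move=> l l' ll'; rewrite /hlow.
  case: (eqVneq l j) => [lj|lj]; case: (eqVneq l' j) => [l'j|l'j] //.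
  - by apply: leq_trans (leqnSn _) _; rewrite -hj; apply: hm; rewrite -lj.
  - apply: Hlow; rewrite ltn_neqAle -l'j ll' andbT.
    by apply: contra lj => /eqP e; apply/eqP/val_inj; rewrite /= e l'j.
  - exact: hm.
have sub : (hess_space (hlow h j) <= hess_space h)%VS.
  apply/subvP => M /hess_memP HM; apply/hess_memP => r s hs; apply: HM.
  apply: leq_trans hs; rewrite /hlow; case: eqP => [sj|_] //.
  by rewrite sj hj leqnSn.
have neq : hess_space (hlow h j) != hess_space h.
  apply/eqP => E.
  have : delta_mx j j \in hess_space h.
    apply/hess_memP => r s hs; rewrite mxE; case: eqP => [rj|_]; case: eqP => [sj|_] //=.
    by exfalso; move: hs; rewrite rj sj hj ltnn.
  rewrite -E => /hess_memP /(_ j j); rewrite /hlow eqxx leqnn => /(_ isT).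
  by rewrite mxE !eqxx /= => /eqP; rewrite oner_eq0.
apply: (Hmin _ _ sub neq); first by exists (hlow h j).
move=> F; split => [[g [gu [Fg HM]]]|[g [gu [Fg HM]]]].
  by exists g; split; [done|split; [done|exact: (subvP sub)]].
have [g' [g'u [Ef HM']]] := normalize n2 gu hj HM.
by exists g'; split => //; split => // k; rewrite Fg Ef.
Qed.

Unset Implicit Arguments.
Set Strict Implicit.

Theorem mainTheorem7 (n : nat) (H H' : {vspace 'M[C]_n}) :
  is_hess_space H -> is_hess_space H' ->
  minimal_hess H -> minimal_hess H' ->
  (X_subset H H' <-> (H <= H')%VS).
Proof.
move=> [h [hf EH]] [h' [hf' EH']] Hmin Hmin'; subst H H'.
split; last first.
  move=> sub F [g [gu [Fg HM]]]; exists g; split => //; split => //.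
  exact: (subvP sub).
move=> Xs.
have stepA : forall j, (h j <= h' j)%N \/ (h j = j.+1 /\ h' j = j).
  move=> j; case: (leqP (h j) (h' j)) => hl; [by left|right].
  have hj0 : (0 < h j)%N by apply: leq_ltn_trans hl.
  have hjn : ((h j).-1 < n)%N by rewrite prednK // hf.1.
  case: (eqVneq (h j).-1 (j : nat)) => e.
    have hjE : h j = j.+1 by rewrite -e prednK.
    case: (ltnP (h' j) j) => h'l.
      have h'n : (h' j < n)%N by apply: ltn_trans h'l _.
      have ij : Ordinal h'n != j by apply/eqP => /(congr1 val) /= ee; move: h'l; rewrite ee ltnn.
      have [g [gu Eg]] := realize ij.
      exfalso; apply: (key_a gu Eg _ _ Xs) => /=; last by [].
      by rewrite hjE ltnS ltnW.
    split => //; apply/anti_leq; rewrite h'l andbT.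
    by rewrite -ltnS -hjE.
  have ij : Ordinal hjn != j by apply/eqP => /(congr1 val) /= ee; move: e; rewrite ee eqxx.
  have [g [gu Eg]] := realize ij.
  exfalso; apply: (key_a gu Eg _ _ Xs) => /=; first by rewrite prednK.
  by rewrite -ltnS prednK.
have Hle : forall j, (h j <= h' j)%N.
  move=> j; case: (stepA j) => [//|[hj h'j]]; exfalso.
  case: (ltnP 1 n) => n2.
    have [l [lj jl]] := key_b n2 hf Hmin hj.
    case: (stepA l) => [hll|[hl _]].
      have : (h' l <= h' j)%N by apply: hf'.2; rewrite -lj leqnSn.
      by rewrite h'j leqNgt (leq_trans jl hll).
    by move: jl; rewrite hl lj ltnn.
  have jlt := ltn_ord j.
  have j0 : (j : nat) = 0%N by lia.
  have jn : (j : nat) = n.-1 by lia.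
  have Eg : invmx 1%:M *m E1n n *m 1%:M = delta_mx j j.
    by rewrite invmx1 mul1mx mulmx1 (E1nE j0 jn).
  have hjj : (j < h j)%N by rewrite hj.
  have h'jj : (h' j <= j)%N by rewrite h'j.
  exact: (@key_a n h h' j j 1%:M (unitmx1 _ _) Eg hjj h'jj Xs).
apply/subvP => M /hess_memP HM; apply/hess_memP => r s hs; apply: HM.
exact: leq_trans (Hle s) hs.
Qed.
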